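(* Let $\phi:\mathbb{N}_0\to\mathbb{N}_0$ satisfy $\phi(0)=0$ and $\phi(x)\neq x$ for all $x\in\mathbb{N}$, and let $n\ge 2$. Assume the local function $\phi_n$ has no cycle. Then: (1) $M_n(\phi)$ is nilpotent of degree at most $n$. (2) For every $k\ge1$ the power $M_n(\phi)^k$ is a binary ($\{0,1\}$-valued) matrix, $\#M_n(\phi)^k\le n-k$ for $1\le k\le n$, and $M_n(\phi)^k\cap M_n(\phi)^l=0$ for all $k\ne l$, $k,l\ge1$. (3) $\widehat{M}_n(\phi)$ is invertible and $\det\widehat{M}_n(\phi)=1$. (4) $\widehat{M}_n(\phi)^{-1}$ is a binary matrix with $\widehat{M}_n(\phi)^{-1}=I+M_n(\phi)+\cdots+M_n(\phi)^{n-1}$ and \[ \#\widehat{M}_n(\phi)^{-1}=n+\sum_{k=1}^{n-1}\#M_n(\phi)^k\le\binom{n+1}{2}. \]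
   Context: $\mathbb{N}=\{1,2,\dots\}$, $\mathbb{N}_0=\mathbb{N}\cup\{0\}$, $D_n=\{1,\dots,n\}$, $D_{n,0}=D_n\cup\{0\}$. The local function $\phi_n:D_{n,0}\to D_{n,0}$ is $\phi_n(x)=\phi(x)$ if $x\in D_n$ and $\phi(x)\in D_n$, and $\phi_n(x)=0$ otherwise. ''$\phi_n$ has no cycle'' means there are no $m\ge2$ and $x\in D_n$ with $\phi_n^m(x)=x$. For $1\le i\le n$, $\mathbf{e}_i$ is the $i$-th unit vector in $\mathbb{Z}^n$ and $\mathbf{e}_0$ is the zero vector. $M_n(\phi)$ is the $n\times n$ matrix whose $j$-th column is $\mathbf{e}_{\phi_n(j)}$, and $\widehat{M}_n(\phi)=I-M_n(\phi)$. For an $n\times n$ matrix $A$, $\#A$ is the number of nonzero entries of $A$ ($\#A^k$ means $\#(A^k)$). For $n\times n$ matrices $A,B$, $A\cap B$ denotes the number of index pairs $(i,j)$ with $A_{ij}B_{ij}\ne0$. A matrix $A$ is nilpotent of degree $k$ if $A^k=0$ and $A^{k-1}\neq 0$. *)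

(* Defs.v *)
From HB Require Import structures.
From mathcomp Require Import all_boot all_order all_algebra.
Set Implicit Arguments. Unset Strict Implicit. Unset Printing Implicit Defensive.
Import Order.TTheory GRing.Theory Num.Theory.
Local Open Scope ring_scope.

Definition local_fun (phi : nat -> nat) (n : nat) (x : nat) : nat :=
  if ((1 <= x <= n) && (1 <= phi x <= n))%N then phi x else 0%N.

Definition no_cycle (phi : nat -> nat) (n : nat) : Prop :=
  ~ (exists m x : nat, (2 <= m)%N /\ (1 <= x <= n)%N /\ iter m (local_fun phi n) x = x).

(* M_n(phi): column j (1-based) is e_{phi_n(j)} (e_0 = 0).
   With 0-based ordinals, entry (i,j) is 1 iff phi_n(j+1) = i+1. *)
Definition Mphi (phi : nat -> nat) (n : nat) : 'M[int]_n :=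
  \matrix_(i < n, j < n) ((local_fun phi n j.+1 == i.+1)%N)%:R.

Definition Mhat (phi : nat -> nat) (n : nat) : 'M[int]_n := 1%:M - Mphi phi n.

Definition nnz {R : nzRingType} {n : nat} (A : 'M[R]_n) : nat :=
  #|[set ij : 'I_n * 'I_n | A ij.1 ij.2 != 0]|.

Definition capnz {R : nzRingType} {n : nat} (A B : 'M[R]_n) : nat :=
  #|[set ij : 'I_n * 'I_n | (A ij.1 ij.2 != 0) && (B ij.1 ij.2 != 0)]|.

Definition binary_mx {R : nzRingType} {n : nat} (A : 'M[R]_n) : Prop :=
  forall i j, A i j = 0 \/ A i j = 1.

Definition nilpotent_of_degree {R : nzRingType} {n : nat} (A : 'M[R]_n) (k : nat) : Prop :=
  A ^+ k = 0 /\ A ^+ k.-1 <> 0.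

(* Main.v *)
Require Import Defs.
From HB Require Import structures.
From mathcomp Require Import all_boot all_order all_algebra.
From Stdlib Require Import Lia.
From mathcomp Require Import zify.
From mathcomp Require Import fingroup perm.
Import Order.TTheory GRing.Theory Num.Theory.
Local Open Scope ring_scope.

Lemma f0 phi n : local_fun phi n 0 = 0%N.
Proof. by rewrite /local_fun. Qed.

Lemma iter_f0 phi n k : iter k (local_fun phi n) 0 = 0%N.
Proof. by elim: k => //= k ->; rewrite f0. Qed.

Lemma f_le phi n x : (local_fun phi n x <= n)%N.
Proof. rewrite /local_fun; case: ifP => // /andP[_ /andP[]] //. Qed.

Lemma iter_le phi n k x : (x <= n)%N -> (iter k (local_fun phi n) x <= n)%N.
Proof. by case: k => //= k _; apply: f_le. Qed.

Lemma fx_neq phi n x : (forall x : nat, (1 <= x)%N -> phi x <> x) ->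
  (1 <= x)%N -> local_fun phi n x != x.
Proof.
move=> Hf Hx; rewrite /local_fun; case: ifP => _.
  by apply/eqP; apply: Hf.
by rewrite eq_sym -lt0n.
Qed.

Lemma distinct phi n a b y : (forall x : nat, (1 <= x)%N -> phi x <> x) ->
  no_cycle phi n -> (y <= n)%N -> (a < b)%N ->
  iter a (local_fun phi n) y != 0%N ->
  iter a (local_fun phi n) y != iter b (local_fun phi n) y.
Proof.
move=> Hf Hnc Hy Hab Hz; set z := iter a _ y.
have zn : (z <= n)%N by apply: iter_le.
have -> : iter b (local_fun phi n) y = iter (b - a) (local_fun phi n) z.
  by rewrite /z -iterD subnK // ltnW.
apply/eqP => E.
have [Hba|Hba] := leqP (b - a) 1.
  have Hba1 : (b - a = 1)%N by move: Hab; rewrite -subn_gt0; lia.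
  move: E; rewrite Hba1 /= => E.
  have zpos : (0 < z)%N by rewrite lt0n.
  by have := @fx_neq phi n z Hf zpos; rewrite -E eqxx.
apply: Hnc; exists (b - a)%N, z; split => //; split => //.
by rewrite lt0n Hz.
Qed.

Lemma iter_n phi n y : (forall x : nat, (1 <= x)%N -> phi x <> x) ->
  no_cycle phi n -> (y <= n)%N -> iter n (local_fun phi n) y = 0%N.
Proof.
move=> Hf Hnc Hy; apply/eqP; apply/negPn/negP => Hnz.
have Hall : forall j, (j <= n)%N -> iter j (local_fun phi n) y != 0%N.
  move=> j Hj; apply/negP => /eqP Ej; move/negP: Hnz; apply.
  by rewrite -[X in iter X _ _](subnK Hj) iterD Ej iter_f0.
set s := [seq iter j (local_fun phi n) y | j <- iota 0 n.+1].
have Hu : uniq s.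
  rewrite map_inj_in_uniq ?iota_uniq // => a b; rewrite !mem_iota /= !add0n.
  move=> Ha Hb E; case: (ltngtP a b) => // Hab.
    by move: (@distinct phi n a b y Hf Hnc Hy Hab (Hall a (ltnSE Ha))); rewrite E eqxx.
  by move: (@distinct phi n b a y Hf Hnc Hy Hab (Hall b (ltnSE Hb))); rewrite E eqxx.
have Hs : {subset s <= iota 1 n}.
  move=> z /mapP[j]; rewrite mem_iota /= add0n => Hj ->.
  rewrite mem_iota lt0n Hall ?(ltnSE Hj) //= add1n ltnS iter_le //.
have := uniq_leq_size Hu Hs; rewrite size_map !size_iota; lia.
Qed.

Lemma iter_ge_n phi n k y : (forall x : nat, (1 <= x)%N -> phi x <> x) ->
  no_cycle phi n -> (y <= n)%N -> (n <= k)%N -> iter k (local_fun phi n) y = 0%N.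
Proof.
move=> Hf Hnc Hy Hk; rewrite -[X in iter X _ _](subnK Hk) iterD iter_n // iter_f0 //.
Qed.

Lemma MX phi n k (i j : 'I_n) :
  (Mphi phi n ^+ k) i j = ((iter k (local_fun phi n) j.+1 == i.+1)%N)%:R.
Proof.
elim: k i j => [|k IH] i j.
  by rewrite expr0 /= mxE eqSS eq_sym.
rewrite exprSr -mulmxE mxE.
under eq_bigr => l _ do rewrite IH /Mphi mxE.
rewrite iterSr.
case E: (local_fun phi n j.+1) => [|l0].
  by rewrite iter_f0 big1 // => l _; rewrite (_ : ((0 == l.+1)%N%:R : int) = 0) ?mulr0.
have Hl0 : (l0 < n)%N by rewrite -E f_le.
rewrite (bigD1 (Ordinal Hl0)) //= eqxx mulr1 big1 ?addr0 // => l Hl.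
rewrite eqSS; case: (eqVneq l0 (nat_of_ord l)) => [El|Nl].
  by move: Hl; rewrite -val_eqE /= El eqxx.
by rewrite (_ : false%:R = 0 :> int) ?mulr0.
Qed.

Definition Sk phi n k : {set 'I_n} :=
  [set j : 'I_n | iter k (local_fun phi n) j.+1 != 0%N].

Lemma S_bound phi n k : (forall x : nat, (1 <= x)%N -> phi x <> x) ->
  no_cycle phi n -> (k <= n)%N -> (#|Sk phi n k| <= n - k)%N.
Proof.
move=> Hf Hnc; elim: k => [|k IH] Hk.
  by rewrite subn0; apply: leq_trans (max_card _) _; rewrite card_ord.
have IH' := IH (ltnW Hk).
case: (set_0Vmem (Sk phi n k.+1)) => [->|[x Hx]]; first by rewrite cards0.
have Hex : exists m, iter m (local_fun phi n) x.+1 != 0%N.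
  by exists k.+1; move: Hx; rewrite inE.
have Hbd : forall m, iter m (local_fun phi n) x.+1 != 0%N -> (m <= n)%N.
  move=> m Hm; case: (leqP m n) => // Hnm.
  by move: Hm; rewrite iter_ge_n // ltnW.
case: (ex_maxnP Hex Hbd) => m Hm Hmax.
have Hkm : (k.+1 <= m)%N by apply: Hmax; move: Hx; rewrite inE.
have Ey : iter k (local_fun phi n) (iter (m - k) (local_fun phi n) x.+1)
          = iter m (local_fun phi n) x.+1.
  by rewrite -iterD subnKC // ltnW.
have Ey1 : iter k.+1 (local_fun phi n) (iter (m - k) (local_fun phi n) x.+1)
          = iter m.+1 (local_fun phi n) x.+1.
  by rewrite iterS Ey.
have yle : (iter (m - k) (local_fun phi n) x.+1 <= n)%N by apply: iter_le.
move: Ey Ey1 yle; case: (iter (m - k) (local_fun phi n) x.+1) => [|y'].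
  by rewrite iter_f0 => E; move: Hm; rewrite -E eqxx.
move=> Ey Ey1 yle.
set yo : 'I_n := Ordinal yle.
have yS : yo \in Sk phi n k by rewrite inE /= Ey.
have yS1 : yo \notin Sk phi n k.+1.
  rewrite inE /= negbK -iterS Ey1; apply/negPn/negP => H.
  by move: (Hmax _ H); rewrite ltnn.
have Hsub : Sk phi n k.+1 \subset Sk phi n k :\ yo.
  apply/subsetP => z Hz; rewrite !inE; apply/andP; split.
    by apply/eqP => E; move: yS1; rewrite -E Hz.
  move: Hz; rewrite inE iterS; apply: contra => /eqP ->; by rewrite f0.
have E := cardsD1 yo (Sk phi n k); rewrite yS /= in E.
move: IH'; rewrite E add1n subnS => IH'.
apply: leq_trans (subset_leq_card Hsub) _.
by rewrite -ltnS prednK // (leq_ltn_trans _ IH').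
Qed.

Lemma natb_neq0 (b : bool) : ((b%:R : int) != 0) = b.
Proof. by case: b. Qed.

Definition Pk phi n k : {set 'I_n * 'I_n} :=
  [set ij : 'I_n * 'I_n | iter k (local_fun phi n) ij.2.+1 == ij.1.+1].

Lemma nnzP phi n k : nnz (Mphi phi n ^+ k) = #|Pk phi n k|.
Proof. by apply: eq_card => ij; rewrite !inE MX natb_neq0. Qed.

Lemma P_S phi n k : #|Pk phi n k| = #|Sk phi n k|.
Proof.
rewrite -(@card_in_imset _ _ snd).
  apply: eq_card => j; rewrite [in RHS]inE; apply/imsetP/idP.
    by move=> [[i j'] /=]; rewrite inE /= => /eqP E ->; rewrite E.
  case E: (iter k (local_fun phi n) j.+1) => [|i] // _.
  have Hi : (i < n)%N.
    have : (iter k (local_fun phi n) j.+1 <= n)%N by apply: iter_le.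
    by rewrite E.
  by exists (Ordinal Hi, j) => //; rewrite inE /= E.
move=> [i1 j1] [i2 j2]; rewrite !inE /= => /eqP E1 /eqP E2 Ej.
by subst j2; congr (_, _); apply: val_inj => /=; apply: succn_inj; rewrite -E1 -E2.
Qed.

Lemma iter_inj phi n a b y : (forall x : nat, (1 <= x)%N -> phi x <> x) ->
  no_cycle phi n -> (y <= n)%N ->
  iter a (local_fun phi n) y != 0%N ->
  iter a (local_fun phi n) y = iter b (local_fun phi n) y -> a = b.
Proof.
move=> Hf Hnc Hy Hz E; case: (ltngtP a b) => // Hab.
  by move: (@distinct phi n a b y Hf Hnc Hy Hab Hz); rewrite E eqxx.
by move: (@distinct phi n b a y Hf Hnc Hy Hab); rewrite -E eqxx => /(_ Hz).
Qed.

Lemma one_hot phi n y z : (forall x : nat, (1 <= x)%N -> phi x <> x) ->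
  no_cycle phi n -> (y <= n)%N -> z != 0%N ->
  (\sum_(k < n) (iter k (local_fun phi n) y == z) =
   [exists k : 'I_n, iter k (local_fun phi n) y == z])%N.
Proof.
move=> Hf Hnc Hy Hz; case: existsP => [[k0 Hk0]|Hno].
  rewrite (bigD1 k0) //= Hk0 big1 // => k Hk.
  apply/eqP; rewrite eqb0; apply/negP => /eqP Ek.
  move/eqP: Hk0 => Hk0.
  have : nat_of_ord k = k0.
    apply: (@iter_inj phi n k k0 y Hf Hnc Hy); first by rewrite Ek.
    by rewrite Ek Hk0.
  by move/val_inj => E; move: Hk; rewrite E eqxx.
rewrite big1 // => k _; apply/eqP; rewrite eqb0; apply/negP => H.
by apply: Hno; exists k.
Qed.

Lemma cap0 phi n k l : (forall x : nat, (1 <= x)%N -> phi x <> x) ->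
  no_cycle phi n -> k <> l ->
  capnz (Mphi phi n ^+ k) (Mphi phi n ^+ l) = 0%N.
Proof.
move=> Hf Hnc Hkl; apply/eqP; rewrite cards_eq0; apply/eqP/setP => ij.
rewrite !inE !MX !natb_neq0; apply: negbTE; apply/negP => /andP[/eqP E1 /eqP E2].
apply: Hkl; apply: (@iter_inj phi n k l ij.2.+1 Hf Hnc) => //.
  by rewrite E1.
by rewrite E1 E2.
Qed.

Lemma Mn0 phi n : (forall x : nat, (1 <= x)%N -> phi x <> x) ->
  no_cycle phi n -> Mphi phi n ^+ n = 0.
Proof.
move=> Hf Hnc; apply/matrixP => i j; by rewrite MX iter_n // mxE.
Qed.

Lemma Mhat_mul phi n : (forall x : nat, (1 <= x)%N -> phi x <> x) ->
  no_cycle phi n -> Mhat phi n *m (\sum_(k < n) Mphi phi n ^+ k) = 1%:M.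
Proof.
move=> Hf Hnc; have := subrX1 (Mphi phi n) n; rewrite Mn0 // sub0r => E.
rewrite /Mhat mulmxE -opprB mulNr -E opprK //.
Qed.

Definition dep phi n x := (\sum_(k < n) (iter k (local_fun phi n) x != 0%N))%N.

Lemma dep_step phi n x : (forall x : nat, (1 <= x)%N -> phi x <> x) ->
  no_cycle phi n -> (x <= n)%N -> local_fun phi n x != 0%N ->
  dep phi n x = (dep phi n (local_fun phi n x)).+1.
Proof.
move=> Hf Hnc Hx Hfx.
have Hx0 : x != 0%N by apply: contra Hfx => /eqP ->; rewrite f0.
have Hn := @iter_n phi n x Hf Hnc Hx.
move: Hn; rewrite /dep; case: n Hf Hnc Hx Hfx => [|n] Hf Hnc Hx Hfx Hn.
  by move: Hx Hx0; rewrite leqn0 => /eqP ->.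
rewrite big_ord_recl big_ord_recr /= -iterSr Hn /= Hx0 addn0 add1n.
congr (_.+1); apply: eq_bigr => i _; by rewrite add0n -iterS iterSr.
Qed.

Lemma natb0 : ((false : nat)%:R : int) = 0.
Proof. by []. Qed.

Lemma detMhat phi n : (forall x : nat, (1 <= x)%N -> phi x <> x) ->
  no_cycle phi n -> \det (Mhat phi n) = 1.
Proof.
move=> Hf Hnc.
have Hdiag : forall i : 'I_n, Mhat phi n i i = 1.
  move=> i; rewrite /Mhat !mxE eqxx /=.
  by rewrite (negbTE (@fx_neq phi n i.+1 Hf isT)) natb0 subr0.
rewrite /determinant (bigD1 (1%g : 'S_n)) //= odd_perm1 expr0 mul1r.
rewrite [X in X + _](_ : _ = 1); last first.
  by rewrite big1 // => i _; rewrite perm1 Hdiag.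
rewrite big1 ?addr0 //.
  move=> s Hs.
  have [i0 Hi0] : exists i0, s i0 != i0.
    apply/existsP; rewrite -negb_forall; apply: contra Hs => /forallP H.
    by apply/eqP/permP => i; rewrite perm1; apply/eqP.
  case: (@arg_maxnP 'I_n i0 (fun i => s i != i) (fun i => dep phi n i.+1) Hi0)
    => i Hi Hmax.
  have Hsi : s (s i) != s i by apply: contra Hi => /eqP /perm_inj ->.
  have Hle := Hmax _ Hsi.
  have Hz : Mhat phi n i (s i) = 0.
    have Hne : (i == s i) = false by apply/negbTE; rewrite eq_sym.
    rewrite /Mhat !mxE Hne natb0 sub0r.
    case: eqP => E; first last.
      by rewrite natb0 oppr0.
    exfalso; move: Hle; rewrite /= (@dep_step phi n (s i).+1 Hf Hnc) ?E //.
    by rewrite ltnn.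
  by rewrite (bigD1 i) //= Hz mul0r mulr0.
Qed.

Lemma sum_rev n : (\sum_(k < n) (n - k) = 'C(n.+1, 2))%N.
Proof.
rewrite -bin2_sum big_nat_rev /= big_nat_recr //= add0n subnn addn0.
by rewrite big_mkord; apply: eq_bigr => i _; rewrite subSS.
Qed.

Lemma card_sum (T : finType) (A : {set T}) : #|A| = (\sum_x (x \in A : nat))%N.
Proof.
rewrite -sum1_card big_mkcond; apply: eq_bigr => x _; by case: (x \in A).
Qed.

Lemma invE phi n (i j : 'I_n) : (forall x : nat, (1 <= x)%N -> phi x <> x) ->
  no_cycle phi n ->
  (\sum_(k < n) Mphi phi n ^+ k) i j =
  ([exists k : 'I_n, iter k (local_fun phi n) j.+1 == i.+1] : nat)%:R.
Proof.
move=> Hf Hnc; rewrite summxE.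
under eq_bigr => k _ do rewrite MX.
by rewrite -natr_sum one_hot.
Qed.

Lemma nnz_inv phi n : (forall x : nat, (1 <= x)%N -> phi x <> x) ->
  no_cycle phi n ->
  nnz (\sum_(k < n) Mphi phi n ^+ k) = (\sum_(k < n) nnz (Mphi phi n ^+ k))%N.
Proof.
move=> Hf Hnc; rewrite /nnz card_sum.
under eq_bigr => ij _ do rewrite inE invE // natb_neq0 -(@one_hot phi n) //.
rewrite exchange_big /=; apply: eq_bigr => k _.
rewrite card_sum; apply: eq_bigr => ij _; by rewrite !inE MX natb_neq0.
Qed.

Arguments Mhat_mul {phi n}.
Arguments Mn0 {phi n}.
Arguments S_bound {phi n k}.
Arguments cap0 {phi n k l}.
Arguments detMhat {phi n}.
Arguments invE {phi n i j}.
Arguments nnz_inv {phi n}.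

Theorem theorem1p5 (phi : nat -> nat) (n : nat) :
  phi 0%N = 0%N ->
  (forall x : nat, (1 <= x)%N -> phi x <> x) ->
  (2 <= n)%N ->
  no_cycle phi n ->
  (* (1) *)
  (exists k : nat, (1 <= k <= n)%N /\ nilpotent_of_degree (Mphi phi n) k) /\
  (* (2) *)
  (forall k : nat, (1 <= k)%N -> binary_mx (Mphi phi n ^+ k)) /\
  (forall k : nat, (1 <= k <= n)%N -> (nnz (Mphi phi n ^+ k) <= n - k)%N) /\
  (forall k l : nat, (1 <= k)%N -> (1 <= l)%N -> k <> l ->
     capnz (Mphi phi n ^+ k) (Mphi phi n ^+ l) = 0%N) /\
  (* (3) *)
  Mhat phi n \in unitmx /\ \det (Mhat phi n) = 1 /\
  (* (4) *)
  binary_mx (invmx (Mhat phi n)) /\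
  invmx (Mhat phi n) = \sum_(k < n) Mphi phi n ^+ k /\
  nnz (invmx (Mhat phi n)) = (n + \sum_(1 <= k < n) nnz (Mphi phi n ^+ k))%N /\
  (nnz (invmx (Mhat phi n)) <= 'C(n.+1, 2))%N.
Proof.
move=> H0 Hf Hn Hnc.
have n0 : (0 < n)%N by apply: leq_trans Hn.
have Hmul := Mhat_mul Hf Hnc.
have [Hunit _] := mulmx1_unit Hmul.
have Hinv : invmx (Mhat phi n) = \sum_(k < n) Mphi phi n ^+ k.
  by rewrite -[RHS](mulKmx Hunit) Hmul mulmx1.
have Hbin : forall k, binary_mx (Mphi phi n ^+ k).
  by move=> k i j; rewrite MX; case: eqP; [right|left].
split.
  have Hex : exists k, Mphi phi n ^+ k == 0 by exists n; rewrite Mn0.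
  case: (ex_minnP Hex) => k /eqP Hk Hmin.
  have Hkn : (k <= n)%N by apply: Hmin; rewrite Mn0.
  have Hk1 : (1 <= k)%N.
    case: k Hk {Hmin Hkn} => // /matrixP /(_ (Ordinal n0) (Ordinal n0)).
    by rewrite expr0 !mxE eqxx.
  exists k; split; first by rewrite Hk1.
  split => // Hk'; have := Hmin k.-1; rewrite Hk' eqxx => /(_ isT).
  by case: k Hk1 {Hk Hmin Hkn Hk'} => // k; rewrite ltnn.
split; first by move=> k _; apply: Hbin.
split.
  by move=> k /andP[_ Hk]; rewrite nnzP P_S S_bound.
split; first by move=> k l _ _; apply: cap0.
split; first by [].
split; first by apply: detMhat.
split; first by move=> i j; rewrite Hinv invE //; case: [exists _, _]; [right|left].
split; first by [].
rewrite Hinv nnz_inv //.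
split.
  rewrite -(big_mkord (fun _ => true) (fun k => nnz (Mphi phi n ^+ k))) (big_ltn n0); congr (_ + _)%N.
  rewrite nnzP P_S.
  have -> : Sk phi n 0 = setT by apply/setP => j; rewrite !inE.
  by rewrite cardsT card_ord.
rewrite -sum_rev; apply: leq_sum => k _.
by rewrite nnzP P_S S_bound // ltnW.
Qed.
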